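(* In the parallel-links routing game with homogeneous costs described in the context, there exists a link $M\in\mathcal L$ such that (i) $T_l(\hat f_l)\ge T_l(f^*_l)$ for all $l\le M$, and (ii) $T_n(\hat f_n)\le T_n(f^*_n)$ for all $n>M$.
   Context: Parallel-links routing game: users $\mathcal N=\{1,\dots,N\}$ share parallel links $\mathcal L=\{1,\dots,L\}$ from a common source to a common destination; link $l$ has capacity $c_l$, links indexed so that $c_1\ge c_2\ge\dots\ge c_L$. User $i$ has demand $r^i>0$, $R=\sum_ir^i<\sum_lc_l$. A routing strategy of user $i$ is $\mathbf f^i=(f^i_l)_l$ with $f^i_l\ge0$, $\sum_lf^i_l=r^i$; $f_l=\sum_if^i_l$. Homogeneous costs: $J^i(\mathbf f)=\sum_lf^i_lT_l(f_l)$, each $T_l:[0,\infty)\to[0,\infty)$ strictly increasing, convex, continuously differentiable, with $T_l(f_l)=T(c_l-f_l)$ for $f_l<c_l$ and $T_l(f_l)=\infty$ for $f_l\ge c_l$, for a single link-independent function $T$ with $T(c_l-f_l)$ strictly increasing in $f_l$. $(\hat f_l)_l$ are the link totals of the unique Nash equilibrium (feasible profile where each user's strategy minimizes its own cost given the others'). $(f^*_l)_l$ are the link totals minimizing the social cost $\sum_lf_lT_l(f_l)$ over feasible profiles. *)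

(* Defs.v *)
From HB Require Import structures.
From mathcomp Require Import all_boot all_order all_algebra.
From mathcomp Require Import all_classical all_reals all_analysis.
Set Implicit Arguments. Unset Strict Implicit. Unset Printing Implicit Defensive.
Import Order.TTheory GRing.Theory Num.Theory.
Import numFieldNormedType.Exports.
Local Open Scope ring_scope.
Local Open Scope classical_set_scope.

Section Routing.
Variables (R : realType) (N L : nat).

(* A routing profile: flow f i l of user i on link l. *)
Definition profile := 'I_N -> 'I_L -> R.

Definition feasible_strategy (r : R) (g : 'I_L -> R) : Prop :=
  (forall l, 0 <= g l) /\ \sum_(l < L) g l = r.

Definition feasible_profile (rs : 'I_N -> R) (f : profile) : Prop :=
  forall i, feasible_strategy (rs i) (f i).

Definition link_total (f : profile) (l : 'I_L) : R := \sum_(i < N) f i l.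

(* All link totals strictly below capacity (i.e. all link costs finite). *)
Definition within_cap (c : 'I_L -> R) (tot : 'I_L -> R) : Prop :=
  forall l, tot l < c l.

(* Homogeneous link cost T_l(x) = T(c_l - x); only meaningful for x < c_l
   (for x >= c_l the paper's cost is +infinity, handled via within_cap). *)
Definition linkcost (T : R -> R) (c : 'I_L -> R) (l : 'I_L) (x : R) : R :=
  T (c l - x).

Definition user_cost T c (f : profile) (i : 'I_N) : R :=
  \sum_(l < L) f i l * linkcost T c l (link_total f l).

Definition replace (f : profile) (i : 'I_N) (g : 'I_L -> R) : profile :=
  fun j => if j == i then g else f j.

(* Nash equilibrium: feasible, finite costs, and no user can lower its cost
   by a unilateral deviation (deviations that push some link to/over capacity
   give that user infinite cost, so only capacity-respecting deviations matter). *)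
Definition is_nash T c rs (f : profile) : Prop :=
  [/\ feasible_profile rs f, within_cap c (link_total f) &
      forall i g, feasible_strategy (rs i) g ->
        within_cap c (link_total (replace f i g)) ->
        user_cost T c f i <= user_cost T c (replace f i g) i].

Definition social_cost T c (tot : 'I_L -> R) : R :=
  \sum_(l < L) tot l * linkcost T c l (tot l).

(* Social optimum: feasible profile with finite cost minimizing the social
   cost over all feasible profiles (infinite-cost profiles never do better). *)
Definition is_social_opt T c rs (f : profile) : Prop :=
  [/\ feasible_profile rs f, within_cap c (link_total f) &
      forall g, feasible_profile rs g -> within_cap c (link_total g) ->
        social_cost T c (link_total f) <= social_cost T c (link_total g)].

(* Standing regularity assumptions on T_l over its finite domain [0, c_l):
   nonnegative, strictly increasing, convex, continuously differentiable
   (continuous on [0,c_l), differentiable on (0,c_l) with continuous derivative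
   admitting a finite right limit at 0, i.e. C^1 on [0,c_l)). *)
Definition regular_linkcost (Tl : R -> R) (cl : R) : Prop :=
  [/\ (forall x, 0 <= x -> x < cl -> 0 <= Tl x),
      (forall x y, 0 <= x -> x < y -> y < cl -> Tl x < Tl y),
      (forall x y t, 0 <= x -> x < cl -> 0 <= y -> y < cl -> 0 <= t -> t <= 1 ->
         Tl (t * x + (1 - t) * y) <= t * Tl x + (1 - t) * Tl y),
      {within `[0, cl[, continuous Tl} &
      [/\ (forall x, 0 < x -> x < cl -> derivable Tl x 1),
          {in `]0, cl[, continuous Tl^`()} &
          exists d0 : R, Tl^`() x @[x --> 0^'+] --> d0]].

End Routing.

(* Main.v *)
Require Import Defs.
From HB Require Import structures.
From mathcomp Require Import all_boot all_order all_algebra.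
From mathcomp Require Import all_classical all_reals all_analysis.
From mathcomp Require Import ring lra zify.
Import Order.TTheory GRing.Theory Num.Theory.
Local Open Scope ring_scope.
Section Aux.
Variable R : realType.

Lemma conv_swap (G : R -> R) (cl x y e : R) :
  (forall x y t, 0 <= x -> x < cl -> 0 <= y -> y < cl -> 0 <= t -> t <= 1 ->
         G (t * x + (1 - t) * y) <= t * G x + (1 - t) * G y) ->
  0 <= x -> x < y -> y < cl -> 0 < e -> e <= y - x ->
  G (x + e) + G (y - e) <= G x + G y.
Proof.
move=> cv x0 xy ycl e0 ey.
have yx : 0 < y - x by lra.
have yx0 : y - x != 0 by rewrite gt_eqF.
set t := (y - x - e) / (y - x).
have t0 : 0 <= t by apply: divr_ge0; lra.
have t1 : t <= 1 by rewrite /t ler_pdivrMr //; lra.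
have xcl : x < cl by lra.
have y0 : 0 <= y by lra.
have h1 := cv x y t x0 xcl y0 ycl t0 t1.
have h2 := cv x y (1 - t) x0 xcl y0 ycl (ltac:(lra)) (ltac:(lra)).
have e1 : t * x + (1 - t) * y = x + e by rewrite /t; field.
have e2 : (1 - t) * x + (1 - (1 - t)) * y = y - e by rewrite /t; field.
rewrite e1 in h1; rewrite e2 in h2.
lra.
Qed.

Lemma chord_le (x y e p0 p1 q0 q1 : R) :
  0 <= x -> x <= y - e -> 0 < e -> p0 <= p1 -> p1 + q0 <= p0 + q1 ->
  p1 <= q1 -> (x + e) * p1 - x * p0 <= y * q1 - (y - e) * q0.
Proof.
move=> x0 xy e0 p01 cv pq.
have h1 : x * (p1 - p0) <= (y - e) * (q1 - q0).
  apply: (@le_trans _ _ (x * (q1 - q0))); first by apply: ler_wpM2l; lra.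
  by apply: ler_wpM2r; lra.
have -> : (x + e) * p1 - x * p0 = x * (p1 - p0) + e * p1 by ring.
have -> : y * q1 - (y - e) * q0 = (y - e) * (q1 - q0) + e * q1 by ring.
have : e * p1 <= e * q1 by apply: ler_wpM2l; lra.
lra.
Qed.

Lemma chord_lt (x y e p0 p1 q0 q1 : R) :
  0 <= x -> x <= y - e -> 0 < e -> p0 <= p1 -> p1 + q0 <= p0 + q1 ->
  p1 < q1 -> (x + e) * p1 - x * p0 < y * q1 - (y - e) * q0.
Proof.
move=> x0 xy e0 p01 cv pq.
have h1 : x * (p1 - p0) <= (y - e) * (q1 - q0).
  apply: (@le_trans _ _ (x * (q1 - q0))); first by apply: ler_wpM2l; lra.
  by apply: ler_wpM2r; lra.
have -> : (x + e) * p1 - x * p0 = x * (p1 - p0) + e * p1 by ring.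
have -> : y * q1 - (y - e) * q0 = (y - e) * (q1 - q0) + e * q1 by ring.
have : e * p1 < e * q1 by rewrite ltr_pM2l.
lra.
Qed.

Lemma pos_lb (n : nat) (x : 'I_n -> R) :
  exists2 e, 0 < e & forall i, 0 < x i -> e <= x i.
Proof.
exists (\big[Num.min/1]_(i | 0 < x i) x i).
  by apply: (big_ind (fun y => 0 < y)) => // a b a0 b0; rewrite lt_min a0 b0.
move=> i xi; rewrite (bigD1 i) //=.
by rewrite ge_min lexx.
Qed.

End Aux.
Section Prof.
Variables (R : realType) (N L : nat).
Implicit Types (f : profile R N L) (g : 'I_L -> R).

Lemma link_total_replace f i g m :
  link_total (replace f i g) m = link_total f m + (g m - f i m).
Proof.
rewrite /link_total (bigD1 i) //= [in RHS](bigD1 i) //= /replace eqxx.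
have -> : \sum_(j < N | j != i) (if j == i then g else f j) m
          = \sum_(j < N | j != i) f j m.
  by apply: eq_bigr => j /negbTE ->.
ring.
Qed.

Lemma sum_two (u v : 'I_L -> R) l n : n != l ->
  (forall m, m != l -> m != n -> u m = v m) ->
  \sum_m u m - \sum_m v m = (u l - v l) + (u n - v n).
Proof.
move=> nl huv; rewrite -sumrB (bigD1 l) //= (bigD1 n) //=.
rewrite big1 ?addr0 // => m /andP [ml mn]; rewrite huv //; ring.
Qed.

Definition move g (src dst : 'I_L) (e : R) : 'I_L -> R :=
  fun m => g m + (if m == dst then e else 0) - (if m == src then e else 0).

Lemma sum_ind (l : 'I_L) (e : R) : \sum_m (if m == l then e else 0) = e.
Proof. by rewrite -big_mkcond big_pred1_eq. Qed.

Lemma move_sum g src dst e : \sum_m move g src dst e m = \sum_m g m.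
Proof.
rewrite /move sumrB big_split /= !sum_ind; ring.
Qed.

Lemma move_feas r g src dst e : src != dst -> 0 <= e -> e <= g src ->
  feasible_strategy r g -> feasible_strategy r (move g src dst e).
Proof.
move=> sd e0 eg [g0 gs]; split; last by rewrite move_sum.
move=> m; rewrite /move; case: eqP => [->|_]; case: eqP => [->|_].
- have := g0 src; lra.
- have := g0 dst; lra.
- lra.
- have := g0 m; lra.
Qed.

Lemma replace_feas (rs : 'I_N -> R) f i g : feasible_profile rs f ->
  feasible_strategy (rs i) g -> feasible_profile rs (replace f i g).
Proof.
move=> hf hg k; rewrite /replace; case: eqP => [->|_] //.
Qed.

Lemma total_move f i src dst e m :
  link_total (replace f i (move (f i) src dst e)) m =
  link_total f m + (if m == dst then e else 0) - (if m == src then e else 0).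
Proof. rewrite link_total_replace /move; ring. Qed.

Lemma total_ge0 (rs : 'I_N -> R) f m : feasible_profile rs f -> 0 <= link_total f m.
Proof. by move=> hf; apply: sumr_ge0 => i _; case: (hf i) => h _; exact: h. Qed.

Lemma nash_move (T : R -> R) (c : 'I_L -> R) (rs : 'I_N -> R) (fh : profile R N L) i (l n : 'I_L) e :
  is_nash T c rs fh -> n != l -> 0 < e -> e <= fh i n ->
  link_total fh l + e < c l ->
  0 <= ((fh i l + e) * linkcost T c l (link_total fh l + e)
         - fh i l * linkcost T c l (link_total fh l))
     + ((fh i n - e) * linkcost T c n (link_total fh n - e)
         - fh i n * linkcost T c n (link_total fh n)).
Proof.
move=> [hf hc hn] nl e0 ef lc.
set g := move (fh i) n l e.
have gf : feasible_strategy (rs i) g by apply: move_feas; [exact: nl | lra | exact: ef | exact: hf].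
have gc : within_cap c (link_total (replace fh i g)).
  have ln : l != n by rewrite eq_sym.
  move=> m; rewrite total_move.
  have [->|ml] := eqVneq m l; first by rewrite (negbTE ln); lra.
  have [->|mn] := eqVneq m n.
    by rewrite ?eqxx; have := hc n; lra.
  by have := hc m; lra.
have := hn i g gf gc; rewrite /user_cost.
have hr : replace fh i g i = g by rewrite /replace eqxx.
rewrite hr -subr_ge0.
rewrite (@sum_two (fun m => g m * linkcost T c m (link_total (replace fh i g) m))
   (fun m => fh i m * linkcost T c m (link_total fh m)) l n nl).
  rewrite !total_move /g /move eqxx (negbTE nl) eq_sym (negbTE nl) eqxx.
  by rewrite ?addr0 ?subr0 ?add0r.
move=> m ml mn; rewrite total_move /g /move (negbTE ml) (negbTE mn).
by rewrite !addr0 !subr0.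
Qed.

Lemma social_move (T : R -> R) (c : 'I_L -> R) (rs : 'I_N -> R) (fs : profile R N L) j (l n : 'I_L) e :
  is_social_opt T c rs fs -> n != l -> 0 < e -> e <= fs j l ->
  link_total fs n + e < c n ->
  0 <= ((link_total fs l - e) * linkcost T c l (link_total fs l - e)
         - link_total fs l * linkcost T c l (link_total fs l))
     + ((link_total fs n + e) * linkcost T c n (link_total fs n + e)
         - link_total fs n * linkcost T c n (link_total fs n)).
Proof.
move=> [hf hc hs] nl e0 ef nc.
set g := move (fs j) l n e.
have ln : l != n by rewrite eq_sym.
have gf : feasible_strategy (rs j) g by apply: move_feas; [exact: ln | lra | exact: ef | exact: hf].
have pf : feasible_profile rs (replace fs j g) by apply: replace_feas.
have gc : within_cap c (link_total (replace fs j g)).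
  move=> m; rewrite total_move.
  have [->|mn] := eqVneq m n; first by rewrite ?eqxx (negbTE nl); lra.
  have [->|ml] := eqVneq m l.
    by rewrite ?eqxx; have := hc l; lra.
  by have := hc m; lra.
have := hs _ pf gc; rewrite /social_cost -subr_ge0.
rewrite (@sum_two (fun m => link_total (replace fs j g) m * linkcost T c m (link_total (replace fs j g) m))
   (fun m => link_total fs m * linkcost T c m (link_total fs m)) l n nl).
  rewrite !total_move eqxx (negbTE nl) (negbTE ln) eqxx.
  by rewrite ?addr0 ?subr0 ?add0r.
move=> m ml mn; rewrite total_move (negbTE ml) (negbTE mn).
by rewrite !addr0 !subr0.
Qed.

End Prof.
Section Main.
Variables (R : realType) (N L : nat) (c : 'I_L -> R) (rs : 'I_N -> R)
  (T : R -> R) (fh fs : profile R N L).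
Hypotheses (cpos : forall l, 0 < c l)
  (cmono : forall l m : 'I_L, (l <= m)%N -> c m <= c l)
  (reg : forall l, regular_linkcost (linkcost T c l) (c l))
  (hN : is_nash T c rs fh) (hS : is_social_opt T c rs fs).

Lemma lc_mono l x y : 0 <= x -> x < y -> y < c l ->
  linkcost T c l x < linkcost T c l y.
Proof. by case: (reg l) => _ m _ _ _; apply: m. Qed.

Lemma lc_mono_le l x y : 0 <= x -> x <= y -> y < c l ->
  linkcost T c l x <= linkcost T c l y.
Proof.
move=> x0; rewrite le_eqVlt => /orP [/eqP -> //|xy] yc.
by apply: ltW; apply: lc_mono.
Qed.

Lemma lc_conv l x y e : 0 <= x -> x < y -> y < c l -> 0 < e -> e <= y - x ->
  linkcost T c l (x + e) + linkcost T c l (y - e)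
  <= linkcost T c l x + linkcost T c l y.
Proof. by case: (reg l) => _ _ cv _ _; apply: conv_swap. Qed.

Lemma lc_shift (l n : 'I_L) x :
  linkcost T c n x = linkcost T c l (x + (c l - c n)).
Proof. by rewrite /linkcost; congr T; ring. Qed.

Lemma sum_pos_ex n (x : 'I_n -> R) : 0 < \sum_i x i -> exists i, 0 < x i.
Proof.
move=> h; case: (boolP [exists i, 0 < x i]) => [/existsP //|].
rewrite negb_exists => /forallP hx.
have : \sum_i x i <= 0 by apply: sumr_le0 => i _; rewrite leNgt hx.
lra.
Qed.

Lemma so_order (l n : 'I_L) : (l < n)%N ->
  link_total fs l <= link_total fs n + (c l - c n).
Proof.
move=> ln; have [hf hc _] := hS.
set A := link_total fs l; set B := link_total fs n; set d := c l - c n.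
have d0 : 0 <= d by rewrite /d subr_ge0; apply: cmono; apply: ltnW.
have B0 : 0 <= B by apply: total_ge0 hf.
rewrite leNgt; apply/negP => hlt.
have [j hj] : exists j, 0 < fs j l by apply: sum_pos_ex; rewrite -/(link_total fs l) -/A; lra.
have nl : n != l by apply/eqP => h; move: ln; rewrite h ltnn.
have Bc : B < c n by apply: hc.
have Ac : A < c l by apply: hc.
set e := Num.min (fs j l) (Num.min ((A - (B + d)) / 2) ((c n - B) / 2)).
have e0 : 0 < e by rewrite !lt_min hj /=; apply/andP; split; lra.
have e1 : e <= fs j l by rewrite ge_min lexx.
have e2 : e <= (A - (B + d)) / 2 by rewrite /e !ge_min lexx !orbT.
have e3 : e <= (c n - B) / 2 by rewrite /e !ge_min lexx !orbT.
have := @social_move R N L T c rs fs j l n e hS nl e0 e1 (ltac:(rewrite -/B; lra)).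
rewrite -/A -/B !(lc_shift l n) -/d.
have E1 : B + e + d = (B + d) + e by ring.
rewrite E1.
have m1 : linkcost T c l (B + d) <= linkcost T c l (B + d + e)
  by apply: lc_mono_le; lra.
have m2 : linkcost T c l (B + d + e) + linkcost T c l (A - e)
    <= linkcost T c l (B + d) + linkcost T c l A
  by apply: lc_conv; lra.
have m3 : linkcost T c l (B + d + e) < linkcost T c l A
  by apply: lc_mono; lra.
have h1 := @chord_lt R (B + d) A e (linkcost T c l (B + d)) (linkcost T c l (B + d + e))
   (linkcost T c l (A - e)) (linkcost T c l A) (ltac:(lra)) (ltac:(lra)) e0 m1 m2 m3.
have h2 : 0 <= d * (linkcost T c l (B + d + e) - linkcost T c l (B + d)).
  apply: mulr_ge0 => //; rewrite subr_ge0; apply: lc_mono_le; lra.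
nra.
Qed.

Lemma pair_lemma (l n : 'I_L) : (l < n)%N ->
  link_total fh l < link_total fs l -> link_total fs n < link_total fh n -> False.
Proof.
move=> ln hl hn.
have ord := @so_order l n ln.
have [hfN hcN hnN] := hN; have [hfS hcS _] := hS.
set a := link_total fh l in hl *; set A := link_total fs l in hl ord *.
set B := link_total fs n in hn ord *; set b := link_total fh n in hn *.
set d := c l - c n in ord *.
have d0 : 0 <= d by rewrite /d subr_ge0; apply: cmono; apply: ltnW.
have a0 : 0 <= a by apply: total_ge0 hfN.
have dd : d = c l - c n by [].
have B0 : 0 <= B by apply: total_ge0 hfS.
have Ac : A < c l by apply: hcS.
have bc : b < c n by apply: hcN.
have nl : n != l by apply/eqP => h; move: ln; rewrite h ltnn.
have [j hj] : exists j, 0 < fs j l by apply: sum_pos_ex; rewrite -/(link_total fs l) -/A; lra.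
have [i0 hi0] : exists i, 0 < fh i n by apply: sum_pos_ex; rewrite -/(link_total fh n) -/b; lra.
have [e1 e10 he1] := @pos_lb R N (fun i => fh i n).
set e := Num.min e1 (Num.min ((A - a) / 2) (Num.min (b - B)
          (Num.min (fs j l) ((b + d - a) / 2)))).
have e0 : 0 < e by rewrite !lt_min e10 hj /=; apply/and3P; split; lra.
have eA : e <= (A - a) / 2 by rewrite /e !ge_min lexx !orbT.
have eb : e <= b - B by rewrite /e !ge_min lexx !orbT.
have ej : e <= fs j l by rewrite /e !ge_min lexx !orbT.
have ed : e <= (b + d - a) / 2 by rewrite /e !ge_min lexx !orbT.
have ei : forall i, 0 < fh i n -> e <= fh i n.
  by move=> i hi; apply: le_trans (he1 i hi); rewrite /e ge_min lexx.
set W := linkcost T c l (a + e); set Ga := linkcost T c l a.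
set Y := linkcost T c n (b - e); set Hb := linkcost T c n b.
have YW : W <= Y.
  rewrite /Y (lc_shift l n) -/d; apply: lc_mono_le; lra.
have ZW : Ga <= W by apply: lc_mono_le; lra.
have XY : Y <= Hb by apply: lc_mono_le; lra.
have pu : forall i, 0 < fh i n ->
    0 <= (fh i l + e) * W - fh i l * Ga + ((fh i n - e) * Y - fh i n * Hb).
  move=> i hi; exact: (@nash_move R N L T c rs fh i l n e hN nl e0 (ei i hi) (ltac:(rewrite -/a; lra))).
set t := fun i => fh i l * (W - Ga) - fh i n * (Hb - Y).
have t0 : forall i, 0 <= t i.
  move=> i; rewrite /t.
  have fil : 0 <= fh i l by case: (hfN i) => h _; exact: h.
  have fin : 0 <= fh i n by case: (hfN i) => h _; exact: h.
  case: (ltrP 0 (fh i n)) => hi.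
    have := pu i hi.
    have : 0 <= e * (Y - W) by apply: mulr_ge0; lra.
    nra.
  have -> : fh i n = 0 by lra.
  rewrite mul0r subr0; apply: mulr_ge0 => //; lra.
have ti0 : e * (Y - W) <= t i0.
  have := pu i0 hi0; rewrite /t; nra.
have st : \sum_i t i = a * (W - Ga) - b * (Hb - Y).
  by rewrite /t sumrB -!mulr_suml.
have NE : e * (Y - W) <= a * (W - Ga) - b * (Hb - Y).
  rewrite -st (bigD1 i0) //=; apply: (le_trans ti0).
  by rewrite lerDl; apply: sumr_ge0 => i _.
have m2 : W + linkcost T c l (A - e) <= Ga + linkcost T c l A
  by apply: lc_conv; lra.
have m3 : W < linkcost T c l A by apply: lc_mono; lra.
have h1 := @chord_lt R a A e Ga W (linkcost T c l (A - e)) (linkcost T c l A)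
   a0 (ltac:(lra)) e0 ZW m2 m3.
have SO := @social_move R N L T c rs fs j l n e hS nl e0 ej (ltac:(rewrite -/B; lra)).
rewrite -/A -/B in SO.
have n1 : linkcost T c n B <= linkcost T c n (B + e) by apply: lc_mono_le; lra.
have n2 : linkcost T c n (B + e) + Y <= linkcost T c n B + Hb by apply: lc_conv; lra.
have n3 : linkcost T c n (B + e) <= Hb by apply: lc_mono_le; lra.
have h2 := @chord_le R B b e (linkcost T c n B) (linkcost T c n (B + e)) Y Hb
   B0 (ltac:(lra)) e0 n1 n2 n3.
nra.
Qed.

Lemma sum_tot (f : profile R N L) : feasible_profile rs f ->
  \sum_l link_total f l = \sum_i rs i.
Proof.
move=> hf; rewrite /link_total exchange_big /=.
by apply: eq_bigr => i _; case: (hf i).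
Qed.

Hypotheses (rpos : forall i, 0 < rs i)
  (hcap : \sum_(i < N) rs i < \sum_(l < L) c l).

Lemma main_sec : exists M : 'I_L,
    (forall l : 'I_L, (l <= M)%N ->
       linkcost T c l (link_total fs l) <= linkcost T c l (link_total fh l)) /\
    (forall n : 'I_L, (M < n)%N ->
       linkcost T c n (link_total fh n) <= linkcost T c n (link_total fs n)).
Proof.
have [hfN hcN _] := hN; have [hfS hcS _] := hS.
have cmp : forall l, link_total fs l <= link_total fh l ->
    linkcost T c l (link_total fs l) <= linkcost T c l (link_total fh l).
  by move=> l h; apply: lc_mono_le; [exact: total_ge0 hfS | exact: h | exact: hcN].
have cmp' : forall l, link_total fh l <= link_total fs l ->
    linkcost T c l (link_total fh l) <= linkcost T c l (link_total fs l).
  by move=> l h; apply: lc_mono_le; [exact: total_ge0 hfN | exact: h | exact: hcS].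
have L0 : (0 < L)%N.
  rewrite lt0n; apply/negP => /eqP L0.
  have h0 : \sum_(l < L) c l = 0.
    by apply: big1 => l _; have := ltn_ord l; rewrite {2}L0.
  move: hcap; rewrite h0 => h.
  have : 0 <= \sum_(i < N) rs i by apply: sumr_ge0 => i _; apply: ltW.
  lra.
case: (boolP [exists l, link_total fh l < link_total fs l]); last first.
  rewrite negb_exists => /forallP hall.
  have LL : (L.-1 < L)%N by rewrite ltn_predL.
  exists (Ordinal LL); split.
    by move=> l _; apply: cmp; rewrite leNgt hall.
  move=> n /= hn; exfalso; have := ltn_ord n; move: hn L0; set m := nat_of_ord n; lia.
move=> hex.
pose p k := [exists l : 'I_L, (val l == k) && (link_total fh l < link_total fs l)].
have exP : exists k, p k.
  move/existsP: hex => [l hl]; exists (val l); apply/existsP; exists l.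
  by rewrite eqxx hl.
case: (ex_minnP exP) => k /existsP [lk /andP [/eqP lkk hlk]] kmin.
have kmin' : forall l : 'I_L, link_total fh l < link_total fs l -> (k <= l)%N.
  move=> l hl; apply: kmin; apply/existsP; exists l; by rewrite eqxx hl.
case: k lkk kmin kmin' => [|k'] lkk _ kmin'.
  exfalso.
  have [n hn] : exists n, link_total fs n < link_total fh n.
    case: (boolP [exists n, link_total fs n < link_total fh n]) => [/existsP //|].
    rewrite negb_exists => /forallP hall.
    have : \sum_l link_total fh l < \sum_l link_total fs l.
      rewrite (bigD1 lk) //= [X in _ < X](bigD1 lk) //=.
      apply: ltr_leD => //; apply: ler_sum => l _; rewrite leNgt; exact: hall.
    by rewrite !sum_tot // ltxx.
  have nk : (lk < n)%N.
    rewrite lkk lt0n; apply/negP => /eqP n0.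
    have : n = lk by apply: val_inj; rewrite /= n0 lkk.
    by move=> e; move: hn; rewrite e => h; have := lt_trans h hlk; rewrite ltxx.
  exact: (@pair_lemma lk n nk hlk hn).
have k'L : (k' < L)%N by apply: ltn_trans (ltn_ord lk); rewrite lkk.
exists (Ordinal k'L); split.
  move=> l /= hl; apply: cmp; rewrite leNgt; apply/negP => h.
  by have := kmin' l h; rewrite ltnNge hl.
move=> n /= hn.
apply: cmp'.
have [e|ne] := eqVneq n lk; first by rewrite e; apply: ltW.
rewrite leNgt; apply/negP => h.
have nk : (lk < n)%N.
  rewrite ltn_neqAle lkk hn andbT.
  by apply/negP => /eqP e; move: ne; rewrite (_ : n = lk) ?eqxx //; apply: val_inj; rewrite /= -e lkk.
exact: (@pair_lemma lk n nk hlk h).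
Qed.

End Main.

Theorem lemma2p3 (R : realType) (N L : nat) (c : 'I_L -> R) (rs : 'I_N -> R)
  (T : R -> R) (fhat fstar : profile R N L) :
  (forall l, 0 < c l) ->
  (forall l m : 'I_L, (l <= m)%N -> c m <= c l) ->
  (forall i, 0 < rs i) ->
  \sum_(i < N) rs i < \sum_(l < L) c l ->
  (forall l, regular_linkcost (linkcost T c l) (c l)) ->
  is_nash T c rs fhat ->
  is_social_opt T c rs fstar ->
  exists M : 'I_L,
    (forall l : 'I_L, (l <= M)%N ->
       linkcost T c l (link_total fstar l) <= linkcost T c l (link_total fhat l)) /\
    (forall n : 'I_L, (M < n)%N ->
       linkcost T c n (link_total fhat n) <= linkcost T c n (link_total fstar n)).
Proof.
move=> cpos cmono rpos hcap reg hN hS.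
exact: (@main_sec R N L c rs T fhat fstar cmono reg hN hS rpos hcap).
Qed.
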